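(* Let $q$ be a square with $\operatorname{char}(\mathbb{F}_q)\neq 2$, and let $X=\{F=0\}\subset\mathbb{P}^n$ be a reduced Frobenius nonclassical hypersurface over $\mathbb{F}_q$ of degree $\sqrt q+1$ such that $F_{1,0}=cF^{\sqrt q}$ for some nonzero constant $c$. Then $X$ is Hermitian.
   Context: $F\in\mathbb{F}_q[x_0,\dots,x_n]$ is homogeneous, $F_{1,0}:=\sum_{i=0}^n x_i^q\frac{\partial F}{\partial x_i}$, and $X$ is Frobenius nonclassical if $F$ divides $F_{1,0}$; reduced means $F$ is squarefree. A Hermitian variety is a hypersurface defined by $\overline{\mathbf{x}}\cdot H\cdot\mathbf{x}^t$ where $\mathbf{x}=(x_0,\dots,x_n)$, $\overline{a}=a^{\sqrt q}$ applied entrywise, and $H$ is a nonzero matrix over $\mathbb{F}_q$ with $\overline{H}^t=H$ (equivalently, projectively equivalent over $\mathbb{F}_q$ to $\sum_{i=0}^r x_i^{\sqrt q+1}=0$ for some $0\le r\le n$). *)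

(* Defs.v *)
From HB Require Import structures.
From mathcomp Require Import all_boot all_order all_algebra all_field.
From mathcomp Require Import mpoly.
Set Implicit Arguments. Unset Strict Implicit. Unset Printing Implicit Defensive.
Import GRing.Theory.
Local Open Scope ring_scope.

Definition frob10 (K : fieldType) (n q : nat) (F : {mpoly K[n.+1]}) : {mpoly K[n.+1]} :=
  \sum_(i < n.+1) 'X_i ^+ q * mderiv i F.

Definition mdvd (K : fieldType) (m : nat) (G F : {mpoly K[m]}) : Prop :=
  exists H : {mpoly K[m]}, F = G * H.

(* reduced = squarefree: no nonconstant square divides F *)
Definition squarefree (K : fieldType) (m : nat) (F : {mpoly K[m]}) : Prop :=
  forall G : {mpoly K[m]}, mdvd (G * G) F -> (msize G <= 1)%N.

Definition frob_nonclassical (K : fieldType) (n q : nat) (F : {mpoly K[n.+1]}) : Prop :=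
  mdvd F (frob10 q F).

(* The Hermitian polynomial  xbar . H . x^t  with  abar = a^s  (s = sqrt q) *)
Definition herm_poly (K : fieldType) (n s : nat) (H : 'M[K]_n.+1) : {mpoly K[n.+1]} :=
  \sum_(i < n.+1) \sum_(j < n.+1) ('X_i ^+ s * (H i j)%:MP * 'X_j).

Definition hermitian_mx (K : fieldType) (n s : nat) (H : 'M[K]_n.+1) : Prop :=
  forall i j, H j i ^+ s = H i j.

(* X = {F = 0} is Hermitian: F defines the same hypersurface as a Hermitian
   polynomial, i.e. F is a nonzero scalar multiple of one. *)
Definition is_hermitian (K : fieldType) (n s : nat) (F : {mpoly K[n.+1]}) : Prop :=
  exists (lam : K) (H : 'M[K]_n.+1),
    [/\ lam != 0, H != 0, hermitian_mx s H & F = lam *: herm_poly s H].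

(* Main.v *)
Require Import Defs.
From HB Require Import structures.
From mathcomp Require Import all_boot all_order all_algebra all_field.
From mathcomp Require Import mpoly.
From mathcomp Require Import all_fingroup all_solvable zify ring.
Import GRing.Theory.
Local Open Scope ring_scope.

Lemma char_facts (K : finFieldType) (s : nat) : #|K| = (s * s)%N ->
  [/\ (1 < s)%N, [pchar K].-nat s & s%:R = 0 :> K].
Proof.
move=> hK.
have [p pr pK] := finPcharP K.
have ab := fin_ring_pchar_abelem pK.
have pg : p.-nat #|K|.
  by case/and3P: ab => pgrp _ _; move: pgrp; rewrite /pgroup cardsT.
have s1 : (1 < s)%N.
  have := finNzRing_gt1 K; rewrite hK; case: s {hK} => [|[|s]] //.
have ps : p.-nat s by apply: pnat_dvd pg; rewrite hK dvdn_mulr.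
split => //; first by rewrite (eq_pnat _ (pcharf_eq pK)).
have := pnatPpi ps (etrans (pi_pdiv s) s1) => /eqP hp.
by apply/eqP; rewrite -(dvdn_pcharf pK) -hp pdiv_dvd.
Qed.
Section Pow.
Variables (K : fieldType) (n s : nat).
Hypothesis hs : [pchar K].-nat s.
Hypothesis s0 : (0 < s)%N.

Lemma powE (F : {mpoly K[n]}) :
  F ^+ s = \sum_(m <- msupp F) (F@_m ^+ s) *: 'X_[m *+ s].
Proof.
have hs' : [pchar {mpoly K[n]}].-nat s by rewrite (eq_pnat _ (pchar_lalg _)).
rewrite {1}(mpolyE F).
rewrite (big_morph (fun x : {mpoly K[n]} => x ^+ s) (fun x y => exprDn_pchar x y hs') (expr0n _ _)).
have := s0; rewrite lt0n => /negPf ->.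
by apply: eq_bigr => m _; rewrite exprZn mpolyXn.
Qed.

Lemma mulmn_inj (u v : 'X_{1..n}) : (u *+ s)%MM = (v *+ s)%MM -> u = v.
Proof.
move=> /mnmP h; apply/mnmP => i; have := h i; rewrite !mulmnE => /eqP.
by rewrite eqn_pmul2r // => /eqP.
Qed.

Lemma powC1 (F : {mpoly K[n]}) u : (F ^+ s)@_(u *+ s) = F@_u ^+ s.
Proof.
rewrite powE raddf_sum /=.
under eq_bigr do rewrite mcoeffZ mcoeffX.
case: (boolP (u \in msupp F)) => hu.
  rewrite (bigD1_seq u) //= ?msupp_uniq // eqxx mulr1 big1 ?addr0 //.
  move=> m hm; case: eqP => [/mulmn_inj e|]; last by rewrite mulr0.
  by rewrite e eqxx in hm.
rewrite big1_seq; last first.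
  move=> m /andP[_ hm]; case: eqP => [/mulmn_inj e|]; last by rewrite mulr0.
  by move: hm; rewrite e (negPf hu).
move: hu; rewrite mcoeff_msupp negbK => /eqP ->; by rewrite expr0n; case: (s) s0.
Qed.

Lemma powC2 (F : {mpoly K[n]}) M : (F ^+ s)@_M != 0 -> exists u, M = (u *+ s)%MM.
Proof.
rewrite powE raddf_sum /=.
under eq_bigr do rewrite mcoeffZ mcoeffX.
case: (boolP (has (fun u => (u *+ s)%MM == M) (msupp F))).
  by case/hasP => u _ /eqP <-; exists u.
move=> /hasPn h; rewrite big1_seq ?eqxx // => m /andP[_ hm].
by rewrite (negPf (h m hm)) mulr0.
Qed.
End Pow.
Lemma coefXqM (K : fieldType) n q (G : {mpoly K[n]}) (k : 'I_n) (M : 'X_{1..n}) : (M k < q)%N ->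
  ('X_k ^+ q * G)@_M = 0.
Proof.
move=> hM; rewrite mpolyXn mcoeffM big1 // => [[a b]] /= /eqP e.
rewrite mcoeffX; case: eqP => [ea|]; last by rewrite mul0r.
have : (q <= M k)%N by rewrite e mnmDE -ea mulmnE mnm1E eqxx mul1n leq_addr.
by rewrite leqNgt hM.
Qed.

Lemma frobC (K : fieldType) n q (F : {mpoly K[n.+1]}) (M : 'X_{1..n.+1}) (j : 'I_n.+1) :
  (q <= M j)%N -> (forall k, k != j -> M k < q)%N ->
  (frob10 q F)@_M = F@_(M - U_(j) *+ q + U_(j))%MM *+ (M j - q).+1.
Proof.
move=> hj hk; rewrite /frob10 raddf_sum (bigD1 j) //= big1 ?addr0; last first.
  by move=> k /hk; apply: coefXqM.
have eM : M = (U_(j) *+ q + (M - U_(j) *+ q))%MM.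
  apply/mnmP => k; rewrite mnmDE mnmBE mulmnE mnm1E.
  case: eqP => [<-|_]; lia.
rewrite {1}eM mulrC mpolyXn mcoeffMX mcoeff_mderiv.
by rewrite mnmBE mulmnE mnm1E eqxx mul1n.
Qed.
Section Comb.
Variable n : nat.
Implicit Types (m u : 'X_{1..n}).

Lemma le1 m a : (m a <= mdeg m)%N.
Proof. by rewrite mdegE (bigD1 a) //= leq_addr. Qed.

Lemma le2 m a b : a != b -> (m a + m b <= mdeg m)%N.
Proof.
move=> ab; have ba : b != a by rewrite eq_sym.
by rewrite mdegE (bigD1 a) //= (bigD1 b) /= ?ba // addnA leq_addr.
Qed.

Lemma le3 m a b c : a != b -> a != c -> b != c -> (m a + m b + m c <= mdeg m)%N.
Proof.
move=> ab ac bc; have ba : b != a by rewrite eq_sym.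
have ca : c != a by rewrite eq_sym. have cb : c != b by rewrite eq_sym.
by rewrite mdegE (bigD1 a) //= (bigD1 b) /= ?ba // (bigD1 c) /= ?ca ?cb // !addnA leq_addr.
Qed.

Lemma comb s m u i : (1 < s)%N -> mdeg m = s.+1 -> (0 < m i)%N ->
  (m + U_(i) *+ (s * s - 1))%MM = (u *+ s)%MM ->
  exists a b, m = (U_(a) *+ s + U_(b))%MM.
Proof.
move=> s1 dm mi /mnmP h.
have hk k : (m k + (i == k) * (s * s - 1) = u k * s)%N.
  by have := h k; rewrite mnmDE !mulmnE mnm1E.
have hi := hk i; rewrite eqxx mul1n in hi.
have mis := le1 m i; rewrite dm in mis.
have s0 : (0 < s)%N by apply: ltnW.
have A : (s <= u i)%N.
  rewrite -(leq_pmul2r s0); move: hi mi; set Q := (s * s)%N; set X := (u i * s)%N; lia.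
have B : (u i <= s.+1)%N.
  rewrite -(leq_pmul2r s0) mulSn; move: hi mis; set Q := (s * s)%N; set X := (u i * s)%N; lia.
have [ui1|ui2] : (u i = s \/ u i = s.+1)%N by lia.
-
  have mi1 : m i = 1%N by move: hi; rewrite ui1; set Q := (s * s)%N; lia.
  case: (pickP [pred k | (k != i) && (0 < m k)%N]) => [k /andP[ki mk]|none].
  + have hk' := hk k; rewrite eq_sym (negPf ki) mul0n addn0 in hk'.
    have := le2 m i k; rewrite eq_sym ki dm => /(_ isT) l2.
    have uk : (0 < u k)%N by move: mk; rewrite hk' muln_gt0 => /andP[].
    have : (s <= u k * s)%N by apply: leq_pmull.
    move=> h2; rewrite -hk' in h2; have mks : m k = s by lia.
    exists k, i; apply/mnmP => l; rewrite mnmDE mulmnE !mnm1E.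
    case: (eqVneq k l) => [<-|kl].
 by rewrite mks eq_sym (negPf ki) mul1n addn0.
    case: (eqVneq i l) => [<-|il]; first by rewrite mi1.
    have := le3 m i k l; rewrite eq_sym ki il kl dm => /(_ isT isT isT); lia.
  + have : mdeg m = 1%N.
      rewrite mdegE (bigD1 i) //= big1 ?mi1 // => k ki.
      by have := none k; rewrite /= ki /=; case: (m k).
    by rewrite dm; case: (s) s1 => [|[]].
- have mi1 : m i = s.+1 by move: hi; rewrite ui2 mulSn; set Q := (s * s)%N; lia.
  exists i, i; apply/mnmP => l; rewrite mnmDE mulmnE !mnm1E.
  case: (eqVneq i l) => [<-|il]; first by rewrite mi1 /= mul1n addn1.
  have := le2 m i l; rewrite il dm => /(_ isT); lia.
Qed.
End Comb.
Lemma Ninj n s (i j a b : 'I_n) : (1 < s)%N ->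
  (U_(i) *+ s + U_(j))%MM = (U_(a) *+ s + U_(b))%MM -> i = a /\ j = b.
Proof.
move=> s1 /mnmP e.
have ei := e i; rewrite !(mnmDE, mulmnE, mnm1E) eqxx in ei.
have ai : a = i.
  case: (eqVneq a i) => // ne; exfalso; move: ei; rewrite (negPf ne).
  case: (j == i); case: (b == i) => /=; lia.
rewrite ai; split => //.
have ej := e j; rewrite !(mnmDE, mulmnE, mnm1E) eqxx in ej.
case: (eqVneq b j) => // ne; exfalso; move: ej; rewrite (negPf ne).
case: (i == j) => /=; lia.
Qed.

Lemma termE (K : fieldType) n s (i j : 'I_n) (c : K) :
  'X_i ^+ s * c%:MP * 'X_j = c *: 'X_[(U_(i) *+ s + U_(j))%MM].
Proof.
by rewrite (mulrC _ c%:MP) mul_mpolyC -scalerAl mpolyXn -mpolyXD.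
Qed.

Lemma exists_nonfix (K : finFieldType) s : #|K| = (s * s)%N -> (1 < s)%N ->
  exists t : K, t ^+ s != t.
Proof.
move=> hK s1; case: (pickP (fun t : K => t ^+ s != t)) => [t ht|none]; first by exists t.
have p0 : ('X^s - 'X : {poly K}) != 0.
  apply/eqP => /eqP; rewrite subr_eq0 => /eqP /(congr1 (size : {poly K} -> nat)).
  by rewrite size_polyXn size_polyX; case: (s) s1 => [|[]].
have := max_poly_roots p0 _ (enum_uniq (pred_of_simpl predT)).
rewrite size_polyDl ?size_polyXn ?size_polyN ?size_polyX; last by case: (s) s1 => [|[]].
rewrite -cardE hK.
have -> : all (root ('X^s - 'X)) (enum (pred_of_simpl (@predT K))).
  apply/allP => t _; rewrite rootE !hornerE subr_eq0.
  by have := none t; rewrite /= => /negbFE.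
move=> /(_ isT); rewrite ltnS; nia.
Qed.

Theorem corollary3p16 (K : finFieldType) (s n : nat) (F : {mpoly K[n.+1]}) (c : K) :
  #|K| = (s * s)%N ->
  (2%:R : K) != 0 ->
  F != 0 ->
  F \is (s.+1).-homog ->
  squarefree F ->
  frob_nonclassical #|K| F ->
  c != 0 ->
  frob10 #|K| F = c *: F ^+ s ->
  is_hermitian s F.
Proof.
move=> hK _ F0 hom _ _ c0 heq.
have [s1 hs sR] := char_facts K s hK.
have s0 : (0 < s)%N by apply: ltnW.
have ss : (s.+1 < s * s)%N.
  have : (2 * s <= s * s)%N by rewrite leq_mul2r s1 orbT.
  lia.
have relB i j : F@_(U_(i) *+ s + U_(j))%MM = c * F@_(U_(j) *+ s + U_(i))%MM ^+ s.
  have := congr1 (mcoeff ((U_(j) *+ s + U_(i)) *+ s)%MM) heq.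
  rewrite mcoeffZ powC1 //.
  rewrite (@frobC _ _ _ _ _ j); first last.
  - move=> k kj; rewrite !(mulmnE, mnmDE, mnm1E) hK eq_sym (negPf kj) /=.
    by rewrite ltn_mul2r s0 /=; case: (i == k) => /=; lia.
  - by rewrite !(mulmnE, mnmDE, mnm1E) hK eqxx /= mul1n leq_mul2r leq_addr orbT.
  move=> <-.
  have -> : ((U_(j) *+ s + U_(i)) *+ s - U_(j) *+ #|K| + U_(j))%MM = (U_(i) *+ s + U_(j))%MM.
    apply/mnmP => k; rewrite !(mulmnE, mnmDE, mnmBE, mnm1E) hK.
    case: (j == k); case: (i == k) => /=; set Q := (s * s)%N; lia.
  rewrite !(mulmnE, mnmDE, mnm1E) hK eqxx /= mulrSr -mulr_natr.
  have -> : ((1 * s + (i == j)) * s - s * s)%N = ((i == j) * s)%N.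
    by rewrite mul1n mulnDl addKn.
  by rewrite natrM sR !mulr0 add0r.
have suppA m : F@_m != 0 -> exists a b, m = (U_(a) *+ s + U_(b))%MM.
  move=> hm.
  have dm : mdeg m = s.+1 by apply: (dhomog_mf hom); rewrite mcoeff_msupp.
  case: (pickP (fun i => (m i)%:R != 0 :> K)) => [i hi|none]; last first.
    have : (mdeg m)%:R = 0 :> K.
      rewrite mdegE natr_sum big1 // => i _.
      by have := none i; rewrite /= => /negbFE /eqP.
    by rewrite dm -addn1 natrD sR add0r => /eqP; rewrite oner_eq0.
  have mi : (0 < m i)%N by move: hi; rewrite lt0n; apply: contraNneq => ->.
  set M := (m + U_(i) *+ (#|K| - 1))%MM.
  have hfr := @frobC _ _ #|K| F M i.
  rewrite /M !(mulmnE, mnmDE, mnm1E) eqxx /= mul1n in hfr.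
  have := hfr (ltac:(lia)).
  have hk : forall k, k != i -> (M k < #|K|)%N.
    move=> k ki; rewrite /M !(mulmnE, mnmDE, mnm1E) eq_sym (negPf ki) /= mul0n addn0 hK.
    by have := @le1 _ m k; rewrite dm; lia.
  move=> /(_ hk).
  have -> : (M - U_(i) *+ #|K| + U_(i))%MM = m.
    apply/mnmP => k; rewrite /M !(mulmnE, mnmDE, mnmBE, mnm1E).
    case: eqP => [<-|_] /=; rewrite hK; lia.
  have -> : (m i + (#|K| - 1) - #|K|).+1 = m i by lia.
  rewrite heq mcoeffZ => e.
  have : (F ^+ s)@_M != 0.
    have : F@_m *+ m i != 0 by rewrite -mulr_natr mulf_neq0.
    by rewrite -e; apply: contraNneq => ->; rewrite mulr0.
  case/(@powC2 _ _ _ hs s0) => u hu.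
  apply: (@comb _ _ _ u _ s1 dm mi); rewrite -hu /M hK //.
have [a [b hab]] : exists a b, F@_(U_(a) *+ s + U_(b))%MM != 0.
  case e: (msupp F) => [|m0 r].
    by move/eqP: e; rewrite msupp_eq0 (negPf F0).
  have : F@_m0 != 0 by rewrite -mcoeff_msupp e mem_head.
  by move=> hm0; have [a [b eab]] := suppA _ hm0; exists a, b; rewrite -eab.
set x := F@_(U_(a) *+ s + U_(b))%MM in hab.
set y := F@_(U_(b) *+ s + U_(a))%MM.
have hx : x = c * y ^+ s by rewrite /x relB.
have hy : y = c * x ^+ s by rewrite /y relB.
have frob (u v : K) : (u + v) ^+ s = u ^+ s + v ^+ s by apply: exprDn_pchar.
have key (t : K) : c * (t * x + t ^+ s * y) ^+ s = t * x + t ^+ s * y.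
  rewrite frob !exprMn -exprM -hK expf_card mulrDr.
  transitivity (t * (c * y ^+ s) + t ^+ s * (c * x ^+ s)); first ring.
  by rewrite -hx -hy.
have [z z0 hz] : exists2 z : K, z != 0 & z = c * z ^+ s.
  case: (eqVneq (x + y) 0) => [xy|xy]; last first.
    by exists (1 * x + 1 ^+ s * y); [rewrite expr1n !mul1r | rewrite key].
  have [t ht] := exists_nonfix K s hK s1.
  exists (t * x + t ^+ s * y); last by rewrite key.
  have -> : y = - x by apply/eqP; rewrite -addr_eq0 addrC xy.
  rewrite mulrN -mulrBl mulf_neq0 //.
  by rewrite subr_eq0 eq_sym.
pose H : 'M[K]_n.+1 := \matrix_(i, j) (F@_(U_(i) *+ s + U_(j))%MM / z).
have zs : z ^+ s != 0 by rewrite expf_neq0.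
exists z, H; split => //.
- apply/eqP => /matrixP /(_ a b); rewrite !mxE => /eqP.
  by rewrite mulf_eq0 invr_eq0 (negPf z0) orbF (negPf hab).
- move=> i j; rewrite !mxE expr_div_n (relB i j) [in RHS]hz.
  by field; rewrite zs c0.
- apply/mpolyP => M; rewrite mcoeffZ /herm_poly raddf_sum /=.
  under eq_bigr => i _ do rewrite raddf_sum /=.
  under eq_bigr => i _ do under eq_bigr => j _ do rewrite termE mcoeffZ mcoeffX mxE.
  case: (eqVneq F@_M 0) => [FM|FM].
    rewrite FM big1 ?mulr0 // => i _; rewrite big1 // => j _.
    by case: eqP => [->|_]; rewrite ?FM ?mul0r ?mulr0.
  have [a' [b' ->]] := suppA _ FM.
  rewrite (bigD1 a') //=.
  set S1 := (X in _ + X).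
  have -> : S1 = 0.
    apply: big1 => i ia; apply: big1 => j _; case: eqP => [/Ninj|]; last by rewrite mulr0.
    by case/(_ s1) => e; rewrite e eqxx in ia.
  rewrite addr0 (bigD1 b') //=.
  set S2 := (X in _ + X).
  have -> : S2 = 0.
    apply: big1 => j jb; case: eqP => [/Ninj|]; last by rewrite mulr0.
    by case/(_ s1) => _ e; rewrite e eqxx in jb.
  by rewrite eqxx mulr1 addr0 mulrC divfK.
Qed.
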